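(* Let $V$ be a locally convex topological real vector space and $C$ a cone in $V$. Assume $X$ and $Y$ are nonempty decomposably $C$-antichain-convex subsets of $V$, $X$ is closed, $\operatorname{co}(Y)$ is compact and $X\cap Y=\emptyset$. (1) If $X$ is $C$-upward, then $X$ and $Y$ are strictly separated. (2) If $X$ is $C$-downward, then $X$ and $Y$ are strictly separated.
   Context: A cone in $V$ is a subset $C$ with $\lambda C\subseteq C$ for all $\lambda>0$ (possibly empty, need not contain $0$). $S\subseteq V$ is $C$-antichain-convex iff for all $x,y\in S$ and $\lambda\in[0,1]$ with $y-x\notin C\cup(-C)$ one has $\lambda x+(1-\lambda)y\in S$; $S$ is decomposably $C$-antichain-convex iff $S$ is a Minkowski sum of finitely many $C$-antichain-convex subsets of $V$. $S$ is $C$-upward iff $S+C\subseteq S$; $C$-downward iff $S-C\subseteq S$. $X$ and $Y$ are strictly separated iff there is a continuous linear functional $f$ on $V$ with $\sup f[X]<\inf f[Y]$. *)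

(* Defs.v *)
From HB Require Import structures.
From mathcomp Require Import all_boot all_order all_algebra.
From mathcomp Require Import all_classical all_reals.
From mathcomp Require Import topology normedtype tvs ereal.
Set Implicit Arguments. Unset Strict Implicit. Unset Printing Implicit Defensive.
Import Order.TTheory GRing.Theory Num.Theory.
Local Open Scope classical_set_scope.
Local Open Scope ring_scope.

Section defs.
Context {R : realType} {V : lmodType R}.

Definition cone (C : set V) : Prop :=
  forall (l : R) (c : V), 0 < l -> C c -> C (l *: c).

Definition antichain_convex (C : set V) (S : set V) : Prop :=
  forall (x y : V) (l : R), S x -> S y -> 0 <= l <= 1 ->
    ~ C (y - x) -> ~ C (- (y - x)) -> S (l *: x + (1 - l) *: y).

Definition minkowski_sum (n : nat) (S : 'I_n -> set V) : set V :=
  [set v | exists x : 'I_n -> V, (forall i, S i (x i)) /\ v = \sum_(i < n) x i].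

Definition decomp_antichain_convex (C : set V) (S : set V) : Prop :=
  exists (n : nat) (T : 'I_n -> set V),
    (forall i, antichain_convex C (T i)) /\ S = minkowski_sum T.

Definition upward (C : set V) (S : set V) : Prop :=
  forall x c, S x -> C c -> S (x + c).

Definition downward (C : set V) (S : set V) : Prop :=
  forall x c, S x -> C c -> S (x - c).

Definition convex (A : set V) : Prop :=
  forall (x y : V) (l : R), A x -> A y -> 0 <= l <= 1 -> A (l *: x + (1 - l) *: y).

Definition conv_hull (Y : set V) : set V :=
  [set v | forall A : set V, convex A -> Y `<=` A -> A v].

End defs.

Definition strictly_separated {R : realType} {V : tvsType R} (X Y : set V) : Prop :=
  exists f : {linear V -> R^o}, continuous f /\
    (ereal_sup [set ((f x : R)%:E) | x in X] < ereal_inf [set ((f y : R)%:E) | y in Y])%E.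

(* Main.v *)
Require Import Defs.
From HB Require Import structures.
From mathcomp Require Import all_boot all_order all_algebra.
From mathcomp Require Import all_classical all_reals.
From mathcomp Require Import topology normedtype tvs ereal.
From mathcomp Require Import ring lra.
From mathcomp Require convex.
Set Implicit Arguments. Unset Strict Implicit. Unset Printing Implicit Defensive.
Import Order.TTheory GRing.Theory Num.Theory.
Local Open Scope classical_set_scope.
Local Open Scope ring_scope.

Section partA.
Context {R : realType} {V : lmodType R}.
Implicit Types (C X Y T : set V).

Definition C0 C (v : V) := C v \/ v = 0.
Definition negC C : set V := [set v | C (- v)].

Lemma cone_negC C : cone C -> cone (negC C).
Proof. by move=> hC l c l0; rewrite /negC /= => Cc; rewrite -scalerN; apply: hC. Qed.

Lemma ac_negC C T : antichain_convex C T -> antichain_convex (negC C) T.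
Proof.
move=> h x y l Tx Ty hl n1 n2; apply: h => // H.
by apply: n2; rewrite /negC /= opprK.
Qed.

Lemma dac_negC C T : decomp_antichain_convex C T -> decomp_antichain_convex (negC C) T.
Proof.
move=> [n [S [hS ->]]]; exists n, S; split => // i; exact: ac_negC.
Qed.

Lemma down_up C X : downward C X -> upward (negC C) X.
Proof. by move=> h x c Xx /= Cc; have := h x (- c) Xx Cc; rewrite opprK. Qed.

Lemma comb1 (a b : V) (l : R) : l *: a + (1 - l) *: b = a + (1 - l) *: (b - a).
Proof.
rewrite scalerBr addrCA -[X in X - (1 - l) *: a]scale1r -scalerBl.
have e : 1 - (1 - l) = l :> R by rewrite opprB addrC subrK.
by rewrite e addrC.
Qed.

Lemma comb2 (a b : V) (l : R) : l *: a + (1 - l) *: b = b + l *: (a - b).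
Proof.
rewrite scalerBr addrCA -[X in X - l *: b]scale1r -scalerBl.
have e : 1 - l + l = 1 :> R by rewrite subrK.
by rewrite addrC.
Qed.

Lemma comb_decomp C T a b l : cone C -> antichain_convex C T -> T a -> T b ->
  0 <= l <= 1 -> exists u c, T u /\ C0 C c /\ l *: a + (1 - l) *: b = u + c.
Proof.
move=> hC hT Ta Tb /andP[l0 l1].
have [Cba|nCba] := pselect (C (b - a)).
  exists a, ((1 - l) *: (b - a)); split => //; split.
    have [->|l1'] := eqVneq l 1; first by right; rewrite subrr scale0r.
    left; apply: hC => //; rewrite subr_gt0 lt_neqAle l1' l1 //.
  exact: comb1.
have [Cab|nCab] := pselect (C (- (b - a))).
  exists b, (l *: (- (b - a))); split => //; split.
    have [->|l0'] := eqVneq l 0; first by right; rewrite scale0r.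
    left; apply: hC => //; rewrite lt_neqAle eq_sym l0' l0 //.
  by rewrite opprB comb2.
exists (l *: a + (1 - l) *: b), 0; split; first by apply: hT => //; apply/andP.
by split; [right|rewrite addr0].
Qed.

Definition Kset C X : set V :=
  [set k | forall t : R, 0 <= t -> forall x, X x -> X (x + t *: k)].

Lemma K0 C X : Kset C X 0.
Proof. by move=> t _ x Xx; rewrite scaler0 addr0. Qed.

Lemma KD C X k1 k2 : Kset C X k1 -> Kset C X k2 -> Kset C X (k1 + k2).
Proof. by move=> h1 h2 t t0 x Xx; rewrite scalerDr addrA; apply: h2 => //; apply: h1. Qed.

Lemma KZ C X s k : 0 <= s -> Kset C X k -> Kset C X (s *: k).
Proof. by move=> s0 h t t0 x Xx; rewrite scalerA; apply: h => //; rewrite mulr_ge0. Qed.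

Lemma KC0 C X c : cone C -> upward C X -> C0 C c -> Kset C X c.
Proof.
move=> hC hX [Cc|->]; last exact: K0.
move=> t t0 x Xx; have [->|t0'] := eqVneq t 0; first by rewrite scale0r addr0.
apply: hX => //; apply: hC => //; rewrite lt_neqAle eq_sym t0' t0 //.
Qed.

Lemma K_sum C X n (c : 'I_n -> V) : cone C -> upward C X ->
  (forall i, C0 C (c i)) -> Kset C X (\sum_(i < n) c i).
Proof.
move=> hC hX hc; elim: n c hc => [|n IH] c hc; first by rewrite big_ord0; exact: K0.
rewrite big_ord_recr /=; apply: KD; first by apply: IH.
exact: KC0.
Qed.


Lemma decomp_sum C n (S : 'I_n -> set V) x y (l : R) : cone C ->
  (forall i, antichain_convex C (S i)) ->
  minkowski_sum S x -> minkowski_sum S y -> 0 <= l <= 1 ->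
  exists u (c : 'I_n -> V), minkowski_sum S u /\ (forall i, C0 C (c i)) /\
    l *: x + (1 - l) *: y = u + \sum_(i < n) c i.
Proof.
move=> hC hS [a [Sa ->]] [b [Sb ->]] hl.
have /choice[f hf] : forall i, exists p : V * V,
    S i p.1 /\ C0 C p.2 /\ l *: a i + (1 - l) *: b i = p.1 + p.2.
  move=> i; have [u [c [Su [Cc e]]]] := comb_decomp hC (hS i) (Sa i) (Sb i) hl.
  by exists (u, c).
exists (\sum_(i < n) (f i).1), (fun i => (f i).2); split.
  by exists (fun i => (f i).1); split => // i; case: (hf i).
split; first by move=> i; case: (hf i) => _ [].
rewrite !scaler_sumr -!big_split /=; apply: eq_bigr => i _.
by case: (hf i) => _ [].
Qed.

Lemma X_convex C X : cone C -> upward C X -> decomp_antichain_convex C X ->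
  convex X.
Proof.
move=> hC hX [n [S [hS eX]]] x y l Xx Xy hl.
rewrite eX in Xx Xy.
have [u [c [Su [Cc ->]]]] := decomp_sum hC hS Xx Xy hl.
have := K_sum hC hX Cc; move=> /(_ 1 ler01 u); rewrite scale1r; apply.
by rewrite eX.
Qed.

Lemma hull_disj C X Y : cone C -> upward C X -> decomp_antichain_convex C Y ->
  X `&` Y = set0 -> forall z, conv_hull Y z -> ~ X z.
Proof.
move=> hC hX [n [S [hS eY]]] XY0 z hz Xz.
pose Y' := [set v | exists y k, Y y /\ Kset C X k /\ v = y - k].
have : Y' z.
  apply: hz.
    move=> v v' l [y [k [Yy [Kk ->]]]] [y' [k' [Yy' [Kk' ->]]]] hl.
    rewrite eY in Yy Yy'.
    have [u [c [Su [Cc e]]]] := decomp_sum (cone_negC hC)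
       (fun i => ac_negC (hS i)) Yy Yy' hl.
    exists u, (\sum_(i < n) (- c i) + (l *: k + (1 - l) *: k')); split.
      by rewrite eY.
    split.
      apply: KD; first apply: K_sum => // i.
        by case: (Cc i) => [h|->]; [left|right; rewrite oppr0].
      case/andP: hl => l0 l1.
      by apply: KD; apply: KZ => //; rewrite subr_ge0.
    rewrite !scalerBr opprD addrACA e sumrN opprD opprK addrA.
    by rewrite !addrA.
  by move=> v Yv; exists v, 0; split => //; split; [exact: K0|rewrite subr0].
move=> [y [k [Yy [Kk ezk]]]].
have : X (z + 1 *: k) by apply: Kk.
rewrite scale1r ezk subrK => Xy.
by have : (X `&` Y) y by []; rewrite XY0.
Qed.

End partA.
Section HBsec.
Context {R : realType} {V : lmodType R}.
Variable p : V -> R.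
Hypothesis p_add : forall x y, p (x + y) <= p x + p y.
Hypothesis p_hom : forall (t : R) x, 0 < t -> p (t *: x) = t * p x.

Lemma p0 : p 0 = 0.
Proof. have h := p_hom 0 (ltr0n _ 2); rewrite scaler0 in h; lra. Qed.

Definition lclosed (G : set (V * R)) := forall a x y, G x -> G y ->
  G (a *: x.1 + y.1, a * x.2 + y.2).
Definition dominated (G : set (V * R)) := forall x, G x -> x.2 <= p x.1.

Variable v0 : V.
Hypothesis hv0 : forall t : R, t <= p (t *: v0).

Definition Pg (G : set (V * R)) :=
  [/\ lclosed G, dominated G & (G = set0 \/ G (v0, 1))].

Lemma Pg_chain (F : set (set (V * R))) : F `<=` Pg -> total_on F subset ->
  Pg (\bigcup_(G in F) G).
Proof.
move=> FP Ftot; split.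
- move=> a x y [G1 FG1 G1x] [G2 FG2 G2y].
  have [s12|s21] := Ftot _ _ FG1 FG2.
    exists G2 => //; have [h _ _] := FP _ FG2; apply: h => //; exact: s12.
  exists G1 => //; have [h _ _] := FP _ FG1; apply: h => //; exact: s21.
- by move=> x [G FG Gx]; have [_ h _] := FP _ FG; exact: h.
- case: (pselect (exists G, F G /\ G !=set0)) => [[G [FG [x Gx]]]|nG].
    right; exists G => //; have [_ _ [G0|//]] := FP _ FG.
    by rewrite G0 in Gx.
  left; apply/seteqP; split => // x [G FG Gx]; apply: nG; exists G; split => //.
  by exists x.
Qed.


Lemma HB_ext : exists f : V -> R,
  [/\ (forall a x y, f (a *: x + y) = a * f x + f y), f v0 = 1 &
       (forall x, f x <= p x)].
Proof.
have [A [PA Amax]] := Zorn_bigcup Pg_chain.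
case: PA => Acl Adom Abase.
pose G0 := [set z : V * R | exists t : R, z = (t *: v0, t)].
have PG0 : Pg G0.
  split.
  - move=> a x y [t ->] [s ->]; exists (a * t + s) => /=.
    by rewrite scalerDl scalerA.
  - by move=> x [t ->]; exact: hv0.
  - by right; exists 1; rewrite scale1r.
have Av0 : A (v0, 1).
  case: Abase => // A0; exfalso; apply: (Amax G0) => //; rewrite A0.
  split => // h; have : G0 (v0, 1) by exists 1; rewrite scale1r.
  by move/h.
have A00 : A (0, 0).
  by have := Acl (-1) _ _ Av0 Av0; rewrite /= scaleN1r addNr mulN1r addNr.
have Auniq : forall x r r', A (x, r) -> A (x, r') -> r = r'.
  move=> x r r' Ar Ar'.
  have h1 := Adom _ (Acl (-1) _ _ Ar' Ar).
  have h2 := Adom _ (Acl (-1) _ _ Ar Ar').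
  rewrite /= scaleN1r addNr p0 in h1 h2; lra.
have Atot : forall v, exists r, A (v, r).
  move=> v; case: (pselect (exists r, A (v, r))) => // nv; exfalso.
  pose S := [set s | exists w r, A (w, r) /\ s = r - p (w - v)].
  have key : forall w r w' r', A (w, r) -> A (w', r') ->
      r' - p (w' - v) <= p (w + v) - r.
    move=> w r w' r' Awr Awr'.
    have := Adom _ (Acl 1 _ _ Awr Awr'); rewrite /= scale1r mul1r => h.
    have := p_add (w + v) (w' - v).
    rewrite addrACA subrr addr0 => h'; lra.
  have Sne : S !=set0 by exists (0 - p (0 - v)), 0, 0.
  have Sub : has_ubound S.
    by exists (p (0 + v) - 0) => s [w [r [Awr ->]]]; exact: key.
  pose c := sup S.
  have D1 : forall w r, A (w, r) -> r - p (w - v) <= c.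
    by move=> w r Awr; apply: ub_le_sup => //; exists w, r.
  have D2 : forall w r, A (w, r) -> c <= p (w + v) - r.
    by move=> w r Awr; apply: ge_sup => // s [w' [r' [Awr' ->]]]; exact: key.
  have Ainv : forall (s : R) w r, A (w, r) -> A (s *: w, s * r).
    move=> s0 w r Awr; have := Acl s0 _ _ Awr A00; by rewrite /= !addr0.
  pose B := [set z : V * R | exists w r t, A (w, r) /\ z = (w + t *: v, r + t * c)].
  apply: (Amax B).
    split.
      move=> [w r] Awr; exists w, r, 0; split => //.
      by rewrite scale0r mul0r !addr0.
    move=> h; apply: nv; exists c.
    have : B (v, c) by exists 0, 0, 1; split => //; rewrite scale1r mul1r !add0r.
    by move/h.
  split.
  - move=> a x y [w1 [r1 [t1 [A1 ->]]]] [w2 [r2 [t2 [A2 ->]]]].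
    exists (a *: w1 + w2), (a * r1 + r2), (a * t1 + t2); split.
      exact: (Acl a _ _ A1 A2).
    congr pair.
      by rewrite scalerDr scalerDl scalerA addrACA.
    by rewrite /=; ring.
  - move=> z [w [r [t [Awr ->]]]] /=.
    case: (ltrgtP t 0) => [tn|tp|->].
    + pose s := - t; have sp : 0 < s by rewrite /s oppr_gt0.
      have ets : t = - s by rewrite /s opprK.
      have := D1 _ _ (Ainv s^-1 _ _ Awr).
      set P := p (s^-1 *: w - v) => h.
      have hs : r - s * P <= s * c.
        by move: h; rewrite -(ler_pM2l sp) mulrBr mulrA mulfV ?gt_eqF // mul1r.
      have -> : w + t *: v = s *: (s^-1 *: w - v).
        by rewrite scalerBr scalerA mulfV ?gt_eqF // scale1r ets scaleNr.
      rewrite p_hom // ets mulNr -/P; lra.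
    + have := D2 _ _ (Ainv t^-1 _ _ Awr).
      set P := p (t^-1 *: w + v) => h.
      have hs : t * c <= t * P - r.
        by move: h; rewrite -(ler_pM2l tp) mulrBr mulrA mulfV ?gt_eqF // mul1r.
      have -> : w + t *: v = t *: (t^-1 *: w + v).
        by rewrite scalerDr scalerA mulfV ?gt_eqF // scale1r.
      rewrite p_hom // -/P; lra.
    + by rewrite scale0r mul0r !addr0; exact: (Adom _ Awr).
  - by right; exists v0, 1, 0; split => //; rewrite scale0r mul0r !addr0.
pose f x := xget 0 [set r | A (x, r)].
have hf : forall x, A (x, f x) by move=> x; exact: (@xgetPex _ 0 [set r | A (x, r)] (Atot x)).
exists f; split.
- move=> a x y; have := Acl a _ _ (hf x) (hf y); rewrite /= => h; exact: Auniq (hf _) h.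
- exact: Auniq (hf _) Av0.
- by move=> x; exact: (Adom _ (hf x)).
Qed.

End HBsec.
Section gauge.
Context {R : realType} {V : lmodType R}.
Variable W : set V.
Hypothesis Wconv : convex W.
Hypothesis W0 : W 0.
Hypothesis Wabs : forall v, exists2 t : R, 0 < t & W (t^-1 *: v).

Definition gset v := [set t : R | 0 < t /\ W (t^-1 *: v)].
Definition gauge v := inf (gset v).

Lemma gset_ne v : gset v !=set0.
Proof. by have [t t0 Wt] := Wabs v; exists t. Qed.

Lemma gset_lb v : has_lbound (gset v).
Proof. by exists 0 => t [t0 _]; exact: ltW. Qed.

Lemma gauge_ge0 v : 0 <= gauge v.
Proof. by apply: lb_le_inf; [exact: gset_ne | move=> t [t0 _]; exact: ltW]. Qed.

Lemma star x (l : R) : W x -> 0 <= l <= 1 -> W (l *: x).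
Proof.
move=> Wx hl; have := Wconv Wx W0 hl; by rewrite scaler0 addr0.
Qed.

Lemma gauge_le v t : 0 < t -> W (t^-1 *: v) -> gauge v <= t.
Proof. by move=> t0 Wt; apply: ge_inf; [exact: gset_lb|]. Qed.

Lemma gauge_mem v s : gauge v < s -> W (s^-1 *: v).
Proof.
move=> gs; have [t [t0 Wt] ts] := inf_lt (gset_ne v) gs.
have s0 : 0 < s by apply: lt_trans ts.
have -> : s^-1 *: v = (t / s) *: (t^-1 *: v).
  by rewrite scalerA mulrAC mulfV ?gt_eqF // mul1r.
apply: star => //; apply/andP; split; first by rewrite divr_ge0 ?ltW.
by rewrite ler_pdivrMr // mul1r ltW.

Qed.

Lemma gauge_le1 w : W w -> gauge w <= 1.
Proof. by move=> Ww; apply: gauge_le; rewrite ?invr1 ?scale1r. Qed.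

Lemma gauge_ge1 v : ~ W v -> 1 <= gauge v.
Proof.
move=> nW; apply: lb_le_inf; first exact: gset_ne.
move=> t [t0 Wt]; rewrite leNgt; apply/negP => t1; apply: nW.
have -> : v = t *: (t^-1 *: v) by rewrite scalerA mulfV ?gt_eqF // scale1r.
by apply: star => //; apply/andP; split; apply: ltW.
Qed.

Lemma gauge_add x y : gauge (x + y) <= gauge x + gauge y.
Proof.
apply/ler_addgt0Pr => e e0.
set s := gauge x + e / 2; set t := gauge y + e / 2.
have s0 : 0 < s by rewrite /s; have := gauge_ge0 x; lra.
have t0 : 0 < t by rewrite /t; have := gauge_ge0 y; lra.
have Wx : W (s^-1 *: x) by apply: gauge_mem; rewrite /s; lra.
have Wy : W (t^-1 *: y) by apply: gauge_mem; rewrite /t; lra.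
have st0 : 0 < s + t by lra.
have : gauge (x + y) <= s + t.
  apply: gauge_le => //.
  have hl : 0 <= s / (s + t) <= 1.
    apply/andP; split; first by rewrite divr_ge0 ?ltW.
    rewrite ler_pdivrMr // mul1r; lra.
  have := Wconv Wx Wy hl.
  have -> : 1 - s / (s + t) = t / (s + t).
    have nz : s + t != 0 by rewrite gt_eqF.
    by apply: (mulIf nz); rewrite mulrBl mul1r !mulfVK //; lra.
  by rewrite !scalerA (mulrAC s) (mulrAC t) !mulfV ?gt_eqF // !mul1r scalerDr.
rewrite /s /t; lra.
Qed.

Lemma gauge_hom_le t v : 0 < t -> gauge (t *: v) <= t * gauge v.
Proof.
move=> t0; rewrite -ler_pdivrMl //; apply: lb_le_inf; first exact: gset_ne.
move=> s [s0 Ws]; rewrite ler_pdivrMl //; apply: gauge_le; first exact: mulr_gt0.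
by rewrite scalerA invfM mulrAC mulVf ?gt_eqF // mul1r.
Qed.

Lemma gauge_hom t v : 0 < t -> gauge (t *: v) = t * gauge v.
Proof.
move=> t0; apply/eqP; rewrite eq_le gauge_hom_le //=.
have := @gauge_hom_le t^-1 (t *: v); rewrite invr_gt0 => /(_ t0).
rewrite scalerA mulVf ?gt_eqF // scale1r => h.
by move: h; rewrite -(ler_pM2l t0) mulrA mulfV ?gt_eqF // mul1r.
Qed.

End gauge.
Section top.
Context {R : realType} {V : tvsType R}.

Lemma convex_set_convex (b : set V) : convex.convex_set (b : set (convex.convex_lmodType V)) -> convex b.
Proof.
move=> cb x y l bx by_ /andP[l0 l1].
have := cb x y (Itv01 l0 l1); rewrite !inE => /(_ bx by_).
done.
Qed.

Lemma conv_nbhs (N : set V) : nbhs 0 N -> exists U : set V,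
  [/\ nbhs 0 U, convex U & U `<=` N].
Proof.
move=> N0; have [B Bc [Bo Bb]] := @locally_convex R V.
have := Bb 0 _ N0; case=> U [BU U0] UN; exists U; split => //.
  by apply: open_nbhs_nbhs; split => //; exact: Bo.
apply: convex_set_convex; apply: Bc; rewrite inE //.
Qed.

Lemma compact_margin (X Z : set V) : closed X -> compact Z ->
  (forall z, Z z -> ~ X z) ->
  nbhs 0 [set u | forall z, Z z -> ~ X (z - u)].
Proof.
move=> cX cZ ZX.
have := (proj1 (compact_near_coveringP Z)) cZ V (nbhs 0) (fun u z => ~ X (z - u)) (nbhs_filter 0).
move=> h; apply: filterS (h _) => [u Hu z Zz|]; first exact: Hu.
move=> z Zz.
have h1 : nbhs (z - 0) (~` X).
  by rewrite subr0; apply: open_nbhs_nbhs; split; [exact: closed_openC|exact: ZX].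
have [[A B] /= [Az B0] AB] := @sub_continuous V (z, 0) _ h1.
exists (A, B) => //= -[x' i] /= [Ax Bi]; exact: (AB (x', i)).
Qed.

Lemma mk_linear (f : V -> R) : (forall a x y, f (a *: x + y) = a * f x + f y) ->
  exists g : {linear V -> R^o}, forall x, g x = f x.
Proof.
move=> hf.
have lf : linear_for *:%R (f : V -> R^o) by move=> a x y; exact: hf.
pose g : {linear V -> R^o} := HB.pack (f : V -> R^o) (GRing.isLinear.Build R V R^o *:%R f lf).
by exists g.
Qed.

Lemma lin_cont (g : {linear V -> R^o}) (U : set V) : nbhs 0 U ->
  (forall u, U u -> g u <= 1) -> continuous g.
Proof.
move=> U0 gU x.
pose U' := U `&` (-%R @` U).
have U'0 : nbhs 0 U' by apply: filterI => //; exact: nbhs0N.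
have gU' : forall u, U' u -> `|g u| <= 1.
  move=> u [Uu [u' Uu' eu]]; rewrite ler_norml gU // andbT.
  by rewrite -eu linearN lerN2; exact: gU.
apply/cvgrPdist_lt => e e0.
have e2 : (e / 2) != 0 by rewrite gt_eqF // divr_gt0.
have := nbhsT x (nbhs0Z e2 U'0).
apply: filterS => y [_ [u U'u <-] <-] /=.
rewrite linearD linearZ /= opprD addNKr normrN normrM.
have := gU' _ U'u; rewrite gtr0_norm ?divr_gt0 // => h.
apply: (le_lt_trans (ler_wpM2l _ h)); first by rewrite ltW ?divr_gt0.
by rewrite mulr1 gtr_pMr ?invf_lt1 ?ltr1n.
Qed.

End top.

Section sep.
Context {R : realType} {V : tvsType R}.

Lemma combD (a b a' b' : V) (l : R) :
  l *: (a + b) + (1 - l) *: (a' + b') = (l *: a + (1 - l) *: a') + (l *: b + (1 - l) *: b').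
Proof. by rewrite !scalerDr addrACA. Qed.

Lemma combB (d z z' : V) (l : R) :
  l *: (d - z) + (1 - l) *: (d - z') = d - (l *: z + (1 - l) *: z').
Proof. by rewrite !scalerBr addrACA -scalerDl (addrC l) subrK scale1r opprD. Qed.

Lemma separation (X Z : set V) : closed X -> convex X -> X !=set0 ->
  compact Z -> convex Z -> Z !=set0 -> (forall z, Z z -> ~ X z) ->
  exists (g : {linear V -> R^o}) (e : R),
    [/\ continuous g, 0 < e & forall x z, X x -> Z z -> g x + e <= g z].
Proof.
move=> cX vX [x0 Xx0] cZ vZ [z0 Zz0] ZX.
have [U [U0 Uc UN]] := conv_nbhs (compact_margin cX cZ ZX).
have Uabs : forall v, exists2 t : R, 0 < t & U (t^-1 *: v).
  move=> v; have := @scale_continuous R V (0, v) U; rewrite /= scale0r => /(_ U0).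
  case=> [[A B]] /= [A0 Bv] AB.
  have [e e0 eA] := (nbhs_ballP _ _).1 A0.
  exists (2 / e); first by rewrite divr_gt0.
  rewrite invf_div; apply: (AB (e / 2, v)); split => //=; [apply: eA|exact: nbhs_singleton].
  rewrite /ball /= sub0r normrN gtr0_norm ?divr_gt0 //.
  by rewrite ltr_pdivrMr // ltr_pMr // ltr1n.
set d0 := z0 - x0.
pose W := [set w | exists u x z, [/\ U u, X x, Z z & w = u + x + (d0 - z)]].
have Wconv : convex W.
  move=> _ _ l [u [x [z [Uu Xx Zz ->]]]] [u' [x' [z' [Uu' Xx' Zz' ->]]]] hl.
  exists (l *: u + (1 - l) *: u'), (l *: x + (1 - l) *: x'),
    (l *: z + (1 - l) *: z'); split; [exact: Uc|exact: vX|exact: vZ|].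
  by rewrite (combD (u + x)) combD combB.
have U00 : U 0 by exact: nbhs_singleton.
have UW : U `<=` W.
  move=> u Uu; exists u, x0, z0; split => //.
  by rewrite /d0 (addrAC z0) subrr add0r addrK.
have W0 : W 0 by exact: UW.
have Wabs : forall v, exists2 t : R, 0 < t & W (t^-1 *: v).
  by move=> v; have [t t0 Ut] := Uabs v; exists t => //; exact: UW.
clearbody d0.
have nWd0 : ~ W d0.
  move=> [u [x [z [Uu Xx Zz e]]]].
  have e' : x = z - u.
    have h : d0 + (u + x - z) = d0 + 0 by rewrite addr0 -addrCA -e.
    have h3 := subr0_eq (addrI _ h).
    by rewrite -h3 (addrC u) addrK.
  by apply: (UN u Uu z Zz); rewrite -e'.
pose p := gauge W.
have p_add : forall x y, p (x + y) <= p x + p y by exact: gauge_add.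
have p_hom : forall (t : R) x, 0 < t -> p (t *: x) = t * p x by exact: gauge_hom.
have hv0 : forall t : R, t <= p (t *: d0).
  move=> t; case: (leP t 0) => [t0|t0].
    by apply: le_trans t0 _; exact: gauge_ge0.
  rewrite p_hom // -{1}(mulr1 t) ler_pM2l //; exact: gauge_ge1.
have [f [flin fd0 fp]] := HB_ext p_add p_hom hv0.
have [g eg] := mk_linear flin.
have gU : forall u, U u -> g u <= 1.
  by move=> u Uu; rewrite eg; apply: le_trans (fp u) _; apply: gauge_le1; exact: UW.
have [t t0 Ut] := Uabs d0.
exists g, t^-1; split.
- exact: lin_cont U0 gU.
- by rewrite invr_gt0.
- move=> x z Xx Zz.
  have hW : W (t^-1 *: d0 + x + (d0 - z)) by exists (t^-1 *: d0), x, z.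
  have := le_trans (fp _) (gauge_le1 hW).
  rewrite -eg linearD linearB linearD linearZ /= !eg fd0 -[t^-1%:A]/(t^-1 * 1) mulr1; lra.
Qed.
End sep.

Section final.
Context {R : realType} {V : tvsType R}.

Lemma hull_convex (Y : set V) : convex (conv_hull Y).
Proof. by move=> x y l hx hy hl; rewrite /conv_hull /= => A cA YA; apply: (cA) => //; [exact: hx cA YA|exact: hy cA YA]. Qed.

Lemma hull_sub (Y : set V) : Y `<=` conv_hull Y.
Proof. by move=> y Yy; rewrite /conv_hull /= => A cA YA; exact: YA. Qed.

Lemma main_up (C X Y : set V) : cone C -> X !=set0 -> Y !=set0 ->
  decomp_antichain_convex C X -> decomp_antichain_convex C Y ->
  closed X -> compact (conv_hull Y) -> X `&` Y = set0 ->
  upward C X -> strictly_separated X Y.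
Proof.
move=> hC neX [y0 Yy0] dX dY cX cZ XY0 hX.
have vX := X_convex hC hX dX.
have [g [e [gc e0 ge]]] := separation cX vX neX cZ (@hull_convex Y)
  (ex_intro _ y0 (hull_sub Yy0)) (fun z hz Xz => hull_disj hC hX dY XY0 hz Xz).
exists g; split => //.
case: neX => x0 Xx0.
pose S := [set (g x : R) | x in X].
have Sne : S !=set0 by exists (g x0); exists x0.
have Sub : has_ubound S.
  exists (g y0 - e) => _ [x Xx <-].
  by have := ge x y0 Xx (hull_sub Yy0); lra.
pose c := sup S.
have hc1 : forall x, X x -> g x <= c.
  by move=> x Xx; apply: ub_le_sup => //; exists x.
have hc2 : forall y, Y y -> c + e <= g y.
  move=> y Yy; suff : c <= g y - e by lra.
  apply: ge_sup => // _ [x Xx <-]; have := ge x y Xx (hull_sub Yy); lra.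
apply: (@le_lt_trans _ _ (c%:E)).
  by apply: ge_ereal_sup => _ [x Xx <-]; rewrite lee_fin; exact: hc1.
apply: (@lt_le_trans _ _ ((c + e)%:E)); first by rewrite lte_fin ltrDl.
by apply: le_ereal_inf_tmp => _ [y Yy <-]; rewrite lee_fin; exact: hc2.
Qed.

End final.

Unset Implicit Arguments.

Theorem theorem9 (R : realType) (V : tvsType R) (C X Y : set V) :
  cone C ->
  X !=set0 -> Y !=set0 ->
  decomp_antichain_convex C X -> decomp_antichain_convex C Y ->
  closed X -> compact (conv_hull Y) -> X `&` Y = set0 ->
  (upward C X -> strictly_separated X Y) /\
  (downward C X -> strictly_separated X Y).
Proof.
move=> hC neX neY dX dY cX cZ XY0; split => h.
  exact: main_up hC neX neY dX dY cX cZ XY0 h.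
apply: (main_up (cone_negC hC) neX neY (dac_negC dX) (dac_negC dY) cX cZ XY0).
exact: down_up.
Qed.
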